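(* Let $\mathcal{G}=(G,\lambda)$ be a simple temporal clique, $G=(V,E)$, and let $\mathcal{T}^-=(V,E^-_T)$ be obtained by the forward construction. Then the forward fireworks cover $S^-_T=\{\{u,v\}\in E:(u,v)\in E^-_T\}\cup\{\{u,v\}\in E: u \text{ is an emitter}\}$ is a temporal spanner of $\mathcal{G}$.
   Context: A simple temporal clique is a pair $\mathcal{G}=(G,\lambda)$ where $G=(V,E)$ is the complete graph on a finite vertex set $V$ and $\lambda:E\to\mathbb{N}$ assigns to each edge a single integer label such that any two distinct edges sharing an endpoint have different labels; the label of an arc $(x,y)$ is $\lambda(\{x,y\})$. A journey from $x$ to $y$ is a sequence of vertices $x=u_0,\dots,u_k=y$ ($k\ge1$) with $\lambda(\{u_{i-1},u_i\})<\lambda(\{u_i,u_{i+1}\})$ for $1\le i<k$. A set $E'\subseteq E$ is a temporal spanner of $\mathcal{G}$ if for every ordered pair of distinct vertices $x,y$ there is a journey from $x$ to $y$ using only edges of $E'$. For a vertex $v$, $e^-(v)$ is the edge incident to $v$ with smallest label. Forward construction: let $E^-$ be the set of arcs $(u,v)$ with $\{u,v\}=e^-(v)$, except that if $e^-(u)=e^-(v)=\{u,v\}$ only one of the two arcs $(u,v),(v,u)$ is included (arbitrarily). Initialize $E^-_T:=E^-$. For every vertex $v$ of out-degree at least $2$ in $(V,E^-)$, let $(v,u_1),\dots,(v,u_\ell)$ be its out-arcs in $E^-$, where $(v,u_\ell)$ has the largest label; for each $i<\ell$, if $u_i$ has out-degree $0$ in $(V,E^-)$, replace $(v,u_i)$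 by $(u_i,v)$ in $E^-_T$, and otherwise remove $(v,u_i)$ from $E^-_T$. Set $\mathcal{T}^-=(V,E^-_T)$. An emitter is a vertex of out-degree $0$ in $\mathcal{T}^-$. *)

(* Defs.v *)
From mathcomp Require Import all_boot.
Set Implicit Arguments. Unset Strict Implicit. Unset Printing Implicit Defensive.

(* A simple temporal clique on the vertex set V (a finType): the complete graph
   whose edge {x,y} (x != y) carries label lam x y = lam y x.  Labels on the
   diagonal are irrelevant. *)
Definition symmetric_labels (V : finType) (lam : V -> V -> nat) :=
  forall x y : V, lam x y = lam y x.

Definition proper_labels (V : finType) (lam : V -> V -> nat) :=
  forall x y z : V, x != y -> x != z -> y != z -> lam x y != lam x z.

Section Forward.
Variables (V : finType) (lam : V -> V -> nat).

Definition emin (v u : V) : bool :=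
  (u != v) && [forall w, (w != v) ==> (lam v u <= lam v w)].

(* pick : the arbitrary choice of which arc to keep when e^-(u) = e^-(v) = {u,v} *)
Variable pick : V -> V -> bool.

Definition Eminus (u v : V) : bool := emin v u && (emin u v ==> pick u v).

Definition outdegE (v : V) : nat := #|[set w | Eminus v w]|.

Definition maxout (v u : V) : bool :=
  [forall w, Eminus v w ==> (lam v w <= lam v u)].

Definition ETarc (a b : V) : bool :=
  (Eminus a b && ((outdegE a < 2) || maxout a b))
  || (Eminus b a && (2 <= outdegE b) && ~~ maxout b a && (outdegE a == 0)).

Definition emitter (v : V) : bool := [forall w, ~~ ETarc v w].

Definition fireworks (x y : V) : bool :=
  (x != y) && [|| ETarc x y, ETarc y x, emitter x | emitter y].

End Forward.

(* journey from x to y using only edges in Es (symmetric edge predicate):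
   vertices x = u_0, u_1, ..., u_k = y with k >= 1, each {u_(i-1),u_i} in Es,
   labels strictly increasing along the walk *)
Definition journey (V : finType) (lam : V -> V -> nat) (Es : V -> V -> bool)
  (x y : V) : Prop :=
  exists p : seq V,
    [/\ p != [::], last x p = y,
        all (fun e => Es e.1 e.2) (zip (x :: p) p)
      & sorted ltn (map (fun e => lam e.1 e.2) (zip (x :: p) p))].

Definition temporal_spanner (V : finType) (lam : V -> V -> nat)
  (Es : V -> V -> bool) : Prop :=
  (forall x y, Es x y -> x != y) /\
  forall x y : V, x != y -> journey lam Es x y.

(* Main.v *)
Require Import Defs.
From mathcomp Require Import all_boot.
From mathcomp Require Import zify.
Set Implicit Arguments. Unset Strict Implicit. Unset Printing Implicit Defensive.

Section Aux.
Variables (V : finType) (lam : V -> V -> nat) (pick : V -> V -> bool).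
Hypothesis Hsym : symmetric_labels lam.
Hypothesis Hprop : proper_labels lam.
Hypothesis Hpick : forall u v : V, u != v -> emin lam v u -> emin lam u v ->
             pick u v (+) pick v u.

Local Notation ET := (ETarc lam pick).
Local Notation EM := (Eminus lam pick).
Local Notation OD := (outdegE lam pick).

Lemma emin_neq v u : emin lam v u -> u != v.
Proof. by case/andP. Qed.

Lemma emin_lt v u w : emin lam v u -> w != v -> w != u -> lam v u < lam v w.
Proof.
case/andP=> uv /forallP H wv wu.
have := H w; rewrite wv /= => le.
rewrite ltn_neqAle le andbT.
apply: Hprop; by rewrite eq_sym // ?(eq_sym u).
Qed.

Lemma emin_uniq v u u' : emin lam v u -> emin lam v u' -> u = u'.
Proof.
move=> H1 H2; case: (eqVneq u u') => // ne.
have ne' : u' != u by rewrite eq_sym.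
have a := emin_lt H1 (emin_neq H2) ne'.
have b := emin_lt H2 (emin_neq H1) ne.
lia.
Qed.

Lemma EM_neq a b : EM a b -> a != b.
Proof. by case/andP=> /emin_neq. Qed.

Lemma OD0 v w : OD v == 0 -> ~~ EM v w.
Proof.
move=> /eqP H; apply/negP => E.
have : w \in [set w | EM v w] by rewrite inE.
by rewrite -[mem _]/(mem [set w | Eminus lam pick v w]) (cards0_eq H) inE.
Qed.

Lemma OD_small v b c : OD v < 2 -> EM v b -> EM v c -> b = c.
Proof.
move=> H Eb Ec; case: (eqVneq b c) => // ne.
have sub : [set b; c] \subset [set w | Eminus lam pick v w].
  by apply/subsetP => w; rewrite !inE => /orP[]/eqP->.
have := subset_leq_card sub; rewrite cards2 ne.
move: H; rewrite /outdegE; lia.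
Qed.

Lemma maxout_uniq v b c : EM v b -> EM v c -> maxout lam pick v b ->
  maxout lam pick v c -> b = c.
Proof.
move=> Eb Ec /forallP Mb /forallP Mc.
have := Mb c; rewrite Ec /= => h1.
have := Mc b; rewrite Eb /= => h2.
case: (eqVneq b c) => // ne.
have : lam v b != lam v c by apply: Hprop => //; [exact: EM_neq | exact: EM_neq].
lia.
Qed.

Lemma ET_neq a b : ET a b -> a != b.
Proof.
rewrite /ET /ETarc => /orP[/andP[/EM_neq]//|/andP[/andP[/andP[/EM_neq]]]].
by rewrite eq_sym.
Qed.

Lemma ET_uniq v b c : ET v b -> ET v c -> b = c.
Proof.
rewrite /ET /ETarc.
case/orP=> [/andP[Eb Hb]|/andP[/andP[/andP[Eb _] _] Ob]];
case/orP=> [/andP[Ec Hc]|/andP[/andP[/andP[Ec _] _] Oc]].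
- case: (ltnP (OD v) 2) => h; first exact: OD_small h Eb Ec.
  move: Hb Hc; rewrite /OD in h; rewrite ltnNge h /= => Hb Hc.
  exact: maxout_uniq Eb Ec Hb Hc.
- by have := @OD0 v b Oc; rewrite Eb.
- by have := @OD0 v c Ob; rewrite Ec.
- case/andP: Eb => Eb _; case/andP: Ec => Ec _.
  exact: emin_uniq Eb Ec.
Qed.

Lemma chainA a b c : ET a b -> ET b c -> lam a b < lam b c.
Proof.
move=> Hab Hbc.
have nbc := ET_neq Hbc; have nab := ET_neq Hab.
move: Hab; rewrite /ET /ETarc.
case/orP=> [/andP[Eab Kab]|/andP[/andP[/andP[Eba Oba] Mba] Oa]].
- have nca : c != a.
    apply/negP => /eqP eca; subst c.
    move: Hbc; rewrite /ET /ETarc.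
    case/orP=> [/andP[Eba _]|/andP[/andP[/andP[_ O2] M] _]].
    + move: Eab Eba; rewrite /Eminus => /andP[m1 i1] /andP[m2 i2].
      have p1 := implyP i1 m2; have p2 := implyP i2 m1.
      by have := Hpick nab m1 m2; rewrite p1 p2.
    + by move: Kab; rewrite ltnNge O2 (negbTE M).
  case/andP: Eab => m _.
  rewrite Hsym; apply: emin_lt m _ nca; by rewrite eq_sym.
- move: Hbc; rewrite /ET /ETarc.
  case/orP=> [/andP[Ebc Kbc]|/andP[/andP[/andP[_ _] _] Ob]].
  + move: Kbc; rewrite ltnNge Oba /= => Mbc.
    have le : lam b a <= lam b c by move/forallP: Mbc => /(_ a); rewrite Eba.
    have nac : a != c by apply/negP => /eqP e; subst c; rewrite Mbc in Mba.
    have ne : lam b a != lam b c.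
      by apply: Hprop => //; rewrite eq_sym.
    rewrite Hsym; lia.
  + by move: Oba; rewrite (eqP Ob).
Qed.

Lemma chainB a b c : ET a b -> emitter lam pick b -> c != a -> c != b ->
  lam a b < lam b c.
Proof.
move=> Hab Em nca ncb; move: Hab; rewrite /ET /ETarc.
case/orP=> [/andP[/andP[m _] _]|/andP[/andP[/andP[Eba Oba] Mba] Oa]].
- by rewrite Hsym; apply: emin_lt.
- exfalso.
  case: (@arg_maxnP V a (fun w => Eminus lam pick b w) (lam b) Eba) => m Pm Hm.
  move/forallP: Em => /(_ m); rewrite /ETarc Pm /=.
  suff -> : maxout lam pick b m by rewrite orbT.
  by apply/forallP => w; apply/implyP => /Hm.
Qed.

Definition fw := fireworks lam pick.
Definition lab (e : V * V) := lam e.1 e.2.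

Definition S (v : V) := forall y, y != v -> exists p : seq V,
  [/\ p != [::], last v p = y, all (fun e => fw e.1 e.2) (zip (v :: p) p),
      sorted ltn (map lab (zip (v :: p) p))
    & (emitter lam pick v -> p = [:: y]) /\ (forall b, ET v b -> head y p = b)].

Lemma S_emitter v : emitter lam pick v -> S v.
Proof.
move=> Em y nyv; exists [:: y]; split => //=.
- by rewrite /fw /fireworks eq_sym nyv Em /= !orbT.
- split => // b Hb; by move/forallP: Em => /(_ b); rewrite Hb.
Qed.

Definition N := (\max_(p : V * V) lam p.1 p.2).+1.

Lemma lamN x y : lam x y < N.
Proof. by rewrite ltnS (@leq_bigmax _ (fun p : V * V => lam p.1 p.2) (x, y)). Qed.

Lemma S_all k v : (forall b, ET v b -> N - lam v b <= k) -> S v.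
Proof.
elim: k v => [|k IH] v Hk.
  case Em: (emitter lam pick v); first exact: S_emitter.
  move/negbT: Em; rewrite /emitter negb_forall => /existsP[b /negbNE Hb].
  by have := Hk b Hb; have := lamN v b; lia.
case Em: (emitter lam pick v); first exact: S_emitter.
move/negbT: Em; rewrite /emitter negb_forall => /existsP[b /negbNE Hb].
have Sb : S b.
  apply: IH => c Hc.
  have := chainA Hb Hc; have := Hk b Hb; have := lamN b c; lia.
move=> y nyv.
have fwvb : fw v b by rewrite /fw /fireworks ET_neq //= Hb.
have Hhead : forall b', ET v b' -> b = b' by move=> b' Hb'; exact: ET_uniq Hb Hb'.
case: (eqVneq y b) => [->|nyb].
  exists [:: b]; split => //=; first by rewrite fwvb.
have [p' [p'n lp' allp' sp' [emp' hp']]] := Sb y nyb.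
exists (b :: p'); split => //=.
- by rewrite fwvb.
- case: p' p'n lp' allp' sp' emp' hp' => [//|c p''] _ lp' allp' sp' emp' hp' /=.
  move: sp' => /= ->; rewrite andbT /lab /=.
  case Emb: (emitter lam pick b).
  + have := emp' Emb => [[ec _]]; subst c.
    apply: chainB => //; by rewrite ?nyv.
  + move/negbT: Emb; rewrite /emitter negb_forall => /existsP[c' /negbNE Hc'].
    have := hp' c' Hc' => /= ec; subst c'.
    exact: chainA Hb Hc'.
- split; [by move=> /forallP /(_ b); rewrite Hb | by move=> b' /Hhead <-].
Qed.

End Aux.

Theorem theorem2 (V : finType) (lam : V -> V -> nat) (pick : V -> V -> bool)
  (Hsym : symmetric_labels lam) (Hprop : proper_labels lam)
  (Hpick : forall u v : V, u != v -> emin lam v u -> emin lam u v ->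
             pick u v (+) pick v u) :
  temporal_spanner lam (fireworks lam pick).
Proof.
split; first by move=> x y /andP[].
move=> x y nxy.
have nyx : y != x by rewrite eq_sym.
have [p [pn lp ap sp _]] :=
  @S_all V lam pick Hsym Hprop Hpick (N lam) x (fun b _ => leq_subr _ _) y nyx.
by exists p.
Qed.
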